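(* Let $(b_n)_{n\ge1}$ be a sequence of positive real numbers. Then $(\theta(M_n)-\theta(m(n)))/b_n\to0$ in probability as $n\to\infty$ if and only if, for every $\varepsilon>0$, $$n\,y_{\Theta(\varepsilon b_n+\theta(m(n)))}\to0\quad\text{and}\quad n\,y_{\Theta(-\varepsilon b_n+\theta(m(n)))}\to\infty\quad(n\to\infty).$$
   Context: Let $\{X_n,n\ge1\}$ be independent, identically distributed random variables with values in $\mathbb{Z}_+=\{0,1,2,\dots\}$ such that $p_k=P[X_1=k]>0$ for every $k\in\mathbb{Z}_+$ (set $p_m=0$ for integers $m\le -1$). For $k\in\mathbb{Z}_+$ let $y_k=\sum_{i>k}p_i$, and set $y_m=1$ for integers $m\le-1$. Let $m(t)=\min\{j\in\mathbb{Z}_+: y_j<1/t\}$ for $t>0$. For the fixed integer $\delta$ define $s_k=p_{k+\delta}/y_{k-1}$ and $\theta(k)=\sum_{i=0}^k s_i$ for $k\in\mathbb{Z}_+$, and $\theta(\infty)=\sum_{i\ge0}s_i\le\infty$. For $t\in[s_0,\theta(\infty))$ let $\Theta(t)=\max\{k\in\mathbb{Z}_+:\theta(k)\le t\}$, so that $y_{\Theta(t)}=P[\theta(X_1)>t]$; for real $t$ outside this range, $y_{\Theta(t)}$ is to be read as $P[\theta(X_1)>t]$. Let $M_n=\max\{X_1,\dots,X_n\}$ for $n\ge1$. *)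

(* Defs.v *)
From HB Require Import structures.
From mathcomp Require Import all_boot all_order all_algebra.
From mathcomp Require Import all_classical all_reals all_analysis.
Set Implicit Arguments. Unset Strict Implicit. Unset Printing Implicit Defensive.
Import Order.TTheory GRing.Theory Num.Theory.
Import numFieldNormedType.Exports.
Local Open Scope classical_set_scope.
Local Open Scope ring_scope.

Section Defs.
Context {R : realType} {d : measure_display} {T : measurableType d}.
Variable (P : probability T R).

(* Each X i is a Z_+-valued random variable: all preimages are events
   (Z_+ carries the discrete sigma-algebra). *)
Definition nat_rv (Y : T -> nat) : Prop :=
  forall A : set nat, measurable (Y @^-1` A).

Definition mutually_independent (X : nat -> T -> nat) : Prop :=
  forall (s : seq nat) (A : nat -> set nat), uniq s ->
    P (\bigcap_(i in [set i | i \in s]) (X i @^-1` A i)) =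
    (\prod_(i <- s) P (X i @^-1` A i))%E.

Definition identically_distributed (X : nat -> T -> nat) : Prop :=
  forall (i : nat) (A : set nat), P (X i @^-1` A) = P (X 0%N @^-1` A).

Variable X : nat -> T -> nat.   (* X i is X_{i+1} in the paper *)

Definition pk (k : nat) : R := fine (P (X 0%N @^-1` [set k])).
Definition p_int (m : int) : R :=
  match m with Posz k => pk k | Negz _ => 0 end.

Definition y_int (m : int) : R :=
  match m with
  | Posz k => fine (P (X 0%N @^-1` [set j | (k < j)%N]))
  | Negz _ => 1
  end.

(* m(t) = min { j in Z_+ : y_j < 1/t } (0 if the set were empty,
   which cannot happen under the hypotheses). *)
Definition m_of (t : R) : nat :=
  match pselect (exists j : nat, y_int (Posz j) < t^-1) with
  | left h => ex_minn h
  | right _ => 0%N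
  end.

Variable delta : int.

Definition s_k (k : nat) : R := p_int (Posz k + delta) / y_int (Posz k - 1).

Definition theta (k : nat) : R := \sum_(0 <= i < k.+1) s_k i.

(* y_{Theta(t)}, read (as in the paper) as P[theta(X_1) > t]. *)
Definition yTheta (t : R) : R := fine (P [set w | t < theta (X 0%N w)]).

Definition M (n : nat) (w : T) : nat := \max_(i < n) X i w.

End Defs.

(* Main.v *)
Require Import Defs.
From HB Require Import structures.
From mathcomp Require Import all_boot all_order all_algebra.
From mathcomp Require Import all_classical all_reals all_analysis.
From mathcomp Require Import ring lra.
Import Order.TTheory GRing.Theory Num.Theory.
Import numFieldNormedType.Exports.
Local Open Scope classical_set_scope.
Local Open Scope ring_scope.
Section RealLemmas.
Context {R : realType}.

Lemma bern (q : R) (n : nat) : 0 <= q <= 1 -> 1 - n%:R * q <= (1 - q) ^+ n.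
Proof.
move=> /andP[q0 q1]; elim: n => [|n IH]; first by rewrite mul0r subr0 expr0.
rewrite exprSr -natr1.
have h : 0 <= (1 - q) by lra.
have h2 : 0 <= n%:R * q by apply: mulr_ge0.
have h3 : (1 - n%:R * q) * (1 - q) <= (1 - q) ^+ n * (1 - q) by apply: ler_wpM2r.
nra.
Qed.

Lemma powmul (q : R) (n : nat) : 0 <= q <= 1 -> (1 - q) ^+ n * (1 + n%:R * q) <= 1.
Proof.
move=> /andP[q0 q1]; elim: n => [|n IH]; first by rewrite mul0r addr0 expr0 mul1r.
rewrite exprSr -natr1.
have ha : 0 <= (1 - q) ^+ n by apply: exprn_ge0; lra.
have h2 : 0 <= n%:R * q by apply: mulr_ge0.
have h4 : 0 <= (1 - q) ^+ n * (n%:R * q * q + q * q).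
  by apply: mulr_ge0 => //; apply: addr_ge0; apply: mulr_ge0.
nra.
Qed.

Lemma explow (q : R) (n : nat) : 0 <= q <= 2^-1 ->
  expR (- (2 * (n%:R * q))) <= (1 - q) ^+ n.
Proof.
move=> /andP[q0 q1].
have e1 : expR (- (2 * q)) <= 1 - q.
  have h := expR_ge1Dx (2 * q).
  have hp : 0 < expR (2 * q) by apply: expR_gt0.
  rewrite expRN.
  have hq : 0 < 1 + 2 * q by lra.
  have h1 : (expR (2 * q))^-1 <= (1 + 2 * q)^-1 by rewrite lef_pV2 // posrE.
  apply: (le_trans h1); rewrite -div1r ler_pdivrMr //; nra.
have -> : - (2 * (n%:R * q)) = n%:R * (- (2 * q)) by ring.
rewrite expRM_natl; apply: lerXn2r => //; rewrite ?nnegrE; last lra.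
exact: ltW (expR_gt0 _).
Qed.

End RealLemmas.
Section Prob.
Context {R : realType} {d : measure_display} {T : measurableType d}.
Context (P : probability T R) (X : nat -> T -> nat) (delta : int).
Context (hX : forall i, nat_rv (X i)).

Local Notation th := (theta P X delta).

Lemma s_ge0 k : 0 <= s_k P X delta k.
Proof.
rewrite /s_k; apply: divr_ge0.
  case: (Posz k + delta) => [j|j] //=; rewrite /pk; apply: fine_ge0; exact: measure_ge0.
case: (Posz k - 1) => [j|j] //=; apply: fine_ge0; exact: measure_ge0.
Qed.

Lemma theta_mono a b : (a <= b)%N -> th a <= th b.
Proof.
move=> ab; rewrite /theta [X in _ <= X](big_cat_nat _ (n:=a.+1)) //=.
by rewrite lerDl; apply: sumr_ge0 => i _; apply: s_ge0.
Qed.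

Lemma th_max a b t : (th (maxn a b) <= t) <-> (th a <= t /\ th b <= t).
Proof.
case: (leqP a b) => h.
  split; last by case.
  by move=> hb; split => //; apply: (le_trans _ hb); apply: theta_mono.
split; last by case.
by move=> ha; split => //; apply: (le_trans _ ha); apply: theta_mono; exact: ltnW.
Qed.

Lemma M_le n w t : (0 < n)%N ->
  (th (M X n w) <= t) <-> (forall i, (i < n)%N -> th (X i w) <= t).
Proof.
move=> n0.
suff H : forall m, (th (M X m w) <= t) <-> (th 0 <= t /\ forall i, (i < m)%N -> th (X i w) <= t).
  rewrite H; split; first by case.
  move=> h; split => //; apply: (le_trans _ (h 0%N n0)); exact: theta_mono.
elim => [|m IH].
  rewrite /M big_ord0; split; first by move=> h; split.
  by case.
rewrite /M big_ord_recr /= -/(M X m w) th_max IH; split.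
  move=> [[h0 hi] hm]; split => // i; rewrite ltnS leq_eqVlt => /orP[/eqP->//|]; exact: hi.
move=> [h0 hi]; split; first by split => // i im; apply: hi; exact: ltnW.
exact: hi.
Qed.

Lemma M_rv n : nat_rv (M X n).
Proof.
elim: n => [|n IH] A.
  have -> : M X 0 @^-1` A = X 0%N @^-1` [set _ | A 0%N].
    by apply/seteqP; split => w /=; rewrite /M big_ord0.
  exact: hX.
have -> : M X n.+1 @^-1` A =
    \bigcup_k (M X n @^-1` [set k] `&` X n @^-1` [set j | A (maxn k j)]).
  apply/seteqP; split => w /=.
    by rewrite /M big_ord_recr /= => h; exists (M X n w) => //.
  by move=> [k _ [/= <-]]; rewrite /M big_ord_recr.
apply: bigcupT_measurable => k; apply: measurableI; [exact: IH | exact: hX].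
Qed.

Lemma PfinE (A : set T) : measurable A -> P A = (fine (P A))%:E.
Proof. by move=> mA; rewrite fineK // fin_num_measure. Qed.

End Prob.
Section Prob2.
Context {R : realType} {d : measure_display} {T : measurableType d}.
Context (P : probability T R) (X : nat -> T -> nat) (delta : int).
Context (hX : forall i, nat_rv (X i)).
Context (hind : mutually_independent P X) (hid : identically_distributed P X).

Local Notation th := (theta P X delta).
Local Notation q := (yTheta P X delta).

Lemma mesM (n : nat) (Q : nat -> Prop) : measurable [set w | Q (M X n w)].
Proof. exact: (M_rv X hX n [set k | Q k]). Qed.

Lemma mesX (i : nat) (Q : nat -> Prop) : measurable [set w | Q (X i w)].
Proof. exact: (hX i [set k | Q k]). Qed.

Lemma q_bounds t : 0 <= q t <= 1.
Proof.
rewrite /yTheta; apply/andP; split; first by apply: fine_ge0; exact: measure_ge0.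
rewrite -lee_fin -PfinE; last exact: (mesX 0 (fun k => t < th k)).
apply: probability_le1; exact: (mesX 0 (fun k => t < th k)).
Qed.

Lemma P_Mle n t : (0 < n)%N ->
  P [set w | th (M X n w) <= t] = ((1 - q t) ^+ n)%:E.
Proof.
move=> n0.
have -> : [set w | th (M X n w) <= t] =
   \bigcap_(i in [set i | i \in iota 0 n]) (X i @^-1` [set k | th k <= t]).
  apply/seteqP; split => w /=.
    by move=> /(M_le _ _ _ _ _ _ n0) h i /=; rewrite mem_iota add0n => /andP[_]; apply: h.
  move=> h; apply/(M_le _ _ _ _ _ _ n0) => i ilt; apply: h => /=.
  by rewrite mem_iota add0n ilt.
rewrite hind ?iota_uniq //.
have hc : forall i, P (X i @^-1` [set k | th k <= t]) = (1 - q t)%:E.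
  move=> i; rewrite hid.
  have -> : X 0%N @^-1` [set k | th k <= t] = ~` [set w | t < th (X 0%N w)].
    by apply/seteqP; split => w /=; rewrite ltNge => h; [rewrite h | apply/negbNE/negP].
  rewrite probability_setC; last exact: (mesX 0 (fun k => t < th k)).
  by rewrite /yTheta EFinB -PfinE //; exact: (mesX 0 (fun k => t < th k)).
under eq_bigr do rewrite hc.
rewrite prodEFin.
have -> : iota 0 n = index_iota 0 n by rewrite /index_iota subn0.
by rewrite prodr_const_nat subn0.
Qed.

Lemma P_Mgt n t : (0 < n)%N ->
  P [set w | t < th (M X n w)] = (1 - (1 - q t) ^+ n)%:E.
Proof.
move=> n0.
have -> : [set w | t < th (M X n w)] = ~` [set w | th (M X n w) <= t].
  by apply/seteqP; split => w /=; rewrite ltNge; [move/negP | move=> h; apply/negP].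
rewrite probability_setC; last exact: (mesM n (fun k => th k <= t)).
by rewrite P_Mle.
Qed.

End Prob2.
Lemma ev_iff {R : realType} (e b x : R) : 0 < b ->
  (e < `|x / b|) <-> (e * b < x \/ x < - (e * b)).
Proof.
move=> hb; rewrite normf_div (gtr0_norm hb) ltr_pdivlMr // ltr_normr.
split; first by move/orP => [h|h]; [left|right]; lra.
by move=> [h|h]; apply/orP; [left|right]; lra.
Qed.

Section Prob3.
Context {R : realType} {d : measure_display} {T : measurableType d}.
Context (P : probability T R) (X : nat -> T -> nat) (delta : int).
Context (hX : forall i, nat_rv (X i)).
Context (hind : mutually_independent P X) (hid : identically_distributed P X).

Local Notation th := (theta P X delta).
Local Notation q := (yTheta P X delta).

Definition Ev n (c b e : R) := [set w | e < `|(th (M X n w) - c) / b|].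

Lemma mesEv n (c b e : R) : measurable (Ev n c b e).
Proof. exact: (mesM X hX n (fun k => e < `|(th k - c) / b|)). Qed.

Lemma mesGt n (t : R) : measurable [set w | t < th (M X n w)].
Proof. exact: (mesM X hX n (fun k => t < th k)). Qed.

Lemma mesLe n (t : R) : measurable [set w | th (M X n w) <= t].
Proof. exact: (mesM X hX n (fun k => th k <= t)). Qed.

Lemma L_up n (c b e : R) : (0 < n)%N -> 0 < b ->
  ((1 - (1 - q (e * b + c)) ^+ n)%:E <= P (Ev n c b e))%E.
Proof.
move=> n0 b0; rewrite -(P_Mgt _ _ _ hX hind hid) //.
apply: le_measure; rewrite ?inE; [exact: mesGt | exact: mesEv|].
by rewrite /Ev => w /= h; apply/(ev_iff _ _ _ b0); left; lra.
Qed.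

Lemma L_dn n (c b e : R) : (0 < n)%N -> 0 < b -> 0 < e ->
  (((1 - q (- (e * b) + c)) ^+ n)%:E <= P (Ev n c b (e / 2)))%E.
Proof.
move=> n0 b0 e0; rewrite -(P_Mle _ _ _ hX hind hid) //.
apply: le_measure; rewrite ?inE; [exact: mesLe | exact: mesEv|].
have eb : 0 < e * b by apply: mulr_gt0.
have e2 : e / 2 * b = (e * b) / 2 by ring.
by rewrite /Ev => w /= h; apply/(ev_iff _ _ _ b0); right; rewrite e2; lra.
Qed.

Lemma L_ev n (c b e : R) : (0 < n)%N -> 0 < b ->
  (P (Ev n c b e) <= (1 - (1 - q (e * b + c)) ^+ n + (1 - q (- (e * b) + c)) ^+ n)%:E)%E.
Proof.
move=> n0 b0; rewrite EFinD -(P_Mgt _ _ _ hX hind hid) // -(P_Mle _ _ _ hX hind hid) //.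
apply: le_trans; last apply: measureU2; [|exact: mesGt | exact: mesLe].
apply: le_measure; rewrite ?inE; [exact: mesEv | |].
  by apply: measurableU; [exact: mesGt | exact: mesLe].
by rewrite /Ev => w /= /(ev_iff _ _ _ b0) [h|h]; [left|right]; lra.
Qed.

End Prob3.
Section Main.
Context {R : realType} {d : measure_display} {T : measurableType d}.
Context (P : probability T R) (X : nat -> T -> nat) (delta : int).
Context (hX : forall i, nat_rv (X i)).
Context (hind : mutually_independent P X) (hid : identically_distributed P X).

Local Notation th := (theta P X delta).
Local Notation q := (yTheta P X delta).

Lemma main_gen (c b : nat -> R) : (forall n, (0 < n)%N -> 0 < b n) ->
 ((forall e : R, 0 < e -> (fun n => P (Ev P X delta n (c n) (b n) e)) @ \oo --> 0%E) <->
  (forall e : R, 0 < e -> (fun n : nat => n%:R * q (e * b n + c n)) @ \oo --> 0 /\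
                 (fun n : nat => n%:R * q (- (e * b n) + c n)) @ \oo --> +oo)).
Proof.
move=> hb.
pose rr e n := fine (P (Ev P X delta n (c n) (b n) e)).
have rr0 : forall e n, 0 <= rr e n by move=> e n; apply: fine_ge0; exact: measure_ge0.
have conv : forall e, (fun n => P (Ev P X delta n (c n) (b n) e)) @ \oo --> 0%E <->
    rr e @ \oo --> 0.
  move=> e; rewrite fine_cvgP; split; first by case.
  move=> h; split => //; near=> n; apply: fin_num_measure; exact: mesEv.
have Er : forall e n, P (Ev P X delta n (c n) (b n) e) = (rr e n)%:E.
  by move=> e n; apply: PfinE; exact: mesEv.
have up_le : forall e n, (0 < n)%N ->
    1 - (1 - q (e * b n + c n)) ^+ n <= rr e n.
  by move=> e n n0; rewrite -lee_fin -Er; apply: L_up => //; apply: hb.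
have dn_le : forall e n, (0 < n)%N -> 0 < e ->
    (1 - q (- (e * b n) + c n)) ^+ n <= rr (e / 2) n.
  by move=> e n n0 e0; rewrite -lee_fin -Er; apply: L_dn => //; apply: hb.
have ev_le : forall e n, (0 < n)%N ->
    rr e n <= 1 - (1 - q (e * b n + c n)) ^+ n + (1 - q (- (e * b n) + c n)) ^+ n.
  by move=> e n n0; rewrite -lee_fin -Er; apply: L_ev => //; apply: hb.
split.
- move=> H e e0.
  have H' : forall e, 0 < e -> rr e @ \oo --> 0 by move=> e1 e1p; apply/conv; apply: H.
  split.
  + apply/cvgrPdist_lt => eps eps0.
    have eps2 : 0 < eps / 2 by apply: divr_gt0.
    near=> n.
    have n0 : (0 < n)%N by near: n; exact: nbhs_infty_ge 1%N.
    have h1 : `|0 - rr e n| < eps / 2.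
      by near: n; apply: cvgr_dist_lt => //; exact: H'.
    have h2 : `|0 - rr e n| < 2^-1.
      by near: n; apply: cvgr_dist_lt => //; exact: H'.
    move: h1 h2; rewrite sub0r normrN ger0_norm // => h1 h2.
    have hu := up_le e n n0.
    have /andP[q0 q1] := q_bounds P X delta hX (e * b n + c n).
    have hp := powmul _ n (q_bounds P X delta hX (e * b n + c n)).
    have N0 : 0 <= n%:R * q (e * b n + c n) by apply: mulr_ge0.
    rewrite sub0r normrN ger0_norm //.
    set a := (1 - q (e * b n + c n)) ^+ n in hu hp.
    set N := n%:R * q (e * b n + c n) in N0 hp *.
    nra.
  + apply/cvgryPgt => A.
    pose K := `|A| + 1.
    have K0 : 0 < K by rewrite /K; apply: ltr_pwDr => //.
    have AK : A <= K by rewrite /K; have := ler_norm A; lra.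
    have e2 : 0 < e / 2 by apply: divr_gt0.
    near=> n.
    have n0 : (0 < n)%N by near: n; exact: nbhs_infty_ge 1%N.
    have hn : 4 * K <= n%:R by near: n; exact: nbhs_infty_ger.
    have hr : `|0 - rr (e / 2) n| < expR (- (2 * K)).
      by near: n; apply: cvgr_dist_lt; [exact: H' | exact: expR_gt0].
    move: hr; rewrite sub0r normrN ger0_norm // => hr.
    have hd := dn_le e n n0 e0.
    have /andP[q0 q1] := q_bounds P X delta hX (- (e * b n) + c n).
    rewrite ltNge; apply/negP => hle.
    set qq := q (- (e * b n) + c n) in hd q0 q1 hle.
    have nn0 : 0 < n%:R :> R by rewrite ltr0n.
    have qh : qq <= 2^-1 by nra.
    have hx : expR (- (2 * (n%:R * qq))) <= (1 - qq) ^+ n by apply: explow; rewrite q0 qh.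
    have : expR (- (2 * K)) <= expR (- (2 * (n%:R * qq))).
      by rewrite ler_expR; lra.
    lra.
- move=> H e e0; apply/conv.
  apply/cvgrPdist_lt => eps eps0.
  have eps2 : 0 < eps / 2 by apply: divr_gt0.
  have [H1 H2] := H e e0. move/cvgryPgt: H2 => H2.
  near=> n.
  have n0 : (0 < n)%N by near: n; exact: nbhs_infty_ge 1%N.
  have h1 : `|0 - n%:R * q (e * b n + c n)| < eps / 2.
    by near: n; apply: cvgr_dist_lt.
  have h2 : 2 / eps < n%:R * q (- (e * b n) + c n).
    by near: n; exact: H2.
  have hev := ev_le e n n0.
  have hbern := bern _ n (q_bounds P X delta hX (e * b n + c n)).
  have hp := powmul _ n (q_bounds P X delta hX (- (e * b n) + c n)).
  have hdn0 : 0 <= (1 - q (- (e * b n) + c n)) ^+ n.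
    by apply: exprn_ge0; have /andP[_ ?] := q_bounds P X delta hX (- (e * b n) + c n); lra.
  move: h1; rewrite sub0r normrN => h1.
  have h1' := le_lt_trans (ler_norm _) h1.
  rewrite sub0r normrN ger0_norm //.
  set dn := (1 - q (- (e * b n) + c n)) ^+ n in hev hp hdn0.
  set Nm := n%:R * q (- (e * b n) + c n) in h2 hp.
  set K := 2 / eps in h2.
  have Keps : dn * K * eps = 2 * dn.
    by rewrite /K; field; rewrite gt_eqF.
  have dK : dn * K <= 1 by nra.
  have : dn * K * eps <= eps by rewrite -[leRHS]mul1r ler_wpM2r //; exact: ltW.
  lra.
Unshelve. all: end_near.
Qed.

End Main.

Theorem corollaryA1 (R : realType) (d : measure_display) (T : measurableType d)
  (P : probability T R) (X : nat -> T -> nat) (delta : int) (b : nat -> R) :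
  (forall i, nat_rv (X i)) ->
  mutually_independent P X ->
  identically_distributed P X ->
  (forall k : nat, 0 < pk P X k) ->
  (forall n : nat, (0 < n)%N -> 0 < b n) ->
  ((forall e : R, 0 < e ->
      (fun n : nat =>
         P [set w | e < `| (theta P X delta (M X n w)
                            - theta P X delta (m_of P X n%:R)) / b n | ])
      @ \oo --> 0%E)
   <->
   (forall e : R, 0 < e ->
      (fun n : nat =>
         n%:R * yTheta P X delta (e * b n + theta P X delta (m_of P X n%:R)))
        @ \oo --> 0
      /\
      (fun n : nat =>
         n%:R * yTheta P X delta (- (e * b n) + theta P X delta (m_of P X n%:R)))
        @ \oo --> +oo)).
Proof.
move=> hX hind hid _ hb.
exact: (main_gen P X delta hX hind hid (fun n => theta P X delta (m_of P X n%:R)) b hb).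
Qed.
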